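(* Let $\mathbf a=(a_i)$ and $\mathbf b=(b_i)$ be sequences in $\{0,1\}^{\mathbb N}$ with $a_1=0$ and $b_1=1$. Then: (1) $F(\mathbf a,\mathbf b)=\mathcal K(\sigma(\mathbf b),\sigma(\mathbf a))$; (2) $E(\mathbf a,\mathbf b)\cap[\sigma(\mathbf b),\sigma(\mathbf a)]=F(\mathbf a,\mathbf b)=\mathcal K(\sigma(\mathbf b),\sigma(\mathbf a))$; (3) $h_{top}(\mathcal K(\sigma(\mathbf b),\sigma(\mathbf a)),\sigma)=h_{top}(E(\mathbf a,\mathbf b),\sigma)$.
   Context: $\sigma$ denotes the left shift on $\{0,1\}^{\mathbb N}$ and $\prec,\preceq$ the lexicographic order; $[\mathbf x,\mathbf y]=\{\mathbf z\colon\mathbf x\preceq\mathbf z\preceq\mathbf y\}$. For $\mathbf t,\mathbf u\in\{0,1\}^{\mathbb N}$, $\mathcal K(\mathbf t,\mathbf u)=\{\mathbf x\colon\mathbf t\preceq\sigma^n(\mathbf x)\preceq\mathbf u\ \forall n\ge0\}$. $E(\mathbf a,\mathbf b)=\{\mathbf x\in\{0,1\}^{\mathbb N}\colon\text{for all }n\ge0,\ \sigma^n(\mathbf x)\preceq\mathbf a\text{ or }\mathbf b\preceq\sigma^n(\mathbf x)\}$. $F(\mathbf a,\mathbf b)=\{\mathbf x\in\{0,1\}^{\mathbb N}\colon\text{for all }n\ge0,\ \sigma(\mathbf b)\preceq\sigma^n(\mathbf x)\preceq\mathbf a\text{ or }\mathbf b\preceq\sigma^n(\mathbf x)\preceq\sigma(\mathbf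 a)\}$. $h_{top}$ is topological entropy. *)

(* Defs.v *)
From HB Require Import structures.
From mathcomp Require Import all_boot all_order all_algebra.
From mathcomp Require Import all_classical all_reals all_analysis.
Set Implicit Arguments. Unset Strict Implicit. Unset Printing Implicit Defensive.
Import Order.TTheory GRing.Theory Num.Theory.
Import numFieldNormedType.Exports.
Local Open Scope classical_set_scope.

(* One-sided binary sequences {0,1}^N; false = 0, true = 1.
   Index 0 corresponds to the paper's index 1 (a_1 = a 0). *)
Definition bitseqN := nat -> bool.

Definition lshift_seq (x : bitseqN) : bitseqN := fun i => x i.+1.

Definition lex_lt (x y : bitseqN) : Prop :=
  exists k, (forall i, (i < k)%N -> x i = y i) /\ x k = false /\ y k = true.

Definition lex_le (x y : bitseqN) : Prop := x = y \/ lex_lt x y.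

Definition lex_interval (x y : bitseqN) : set bitseqN :=
  [set z | lex_le x z /\ lex_le z y].

Definition Kset (t u : bitseqN) : set bitseqN :=
  [set x | forall n : nat, lex_le t (iter n lshift_seq x) /\ lex_le (iter n lshift_seq x) u].

Definition Eset (a b : bitseqN) : set bitseqN :=
  [set x | forall n : nat, lex_le (iter n lshift_seq x) a \/ lex_le b (iter n lshift_seq x)].

Definition Fset (a b : bitseqN) : set bitseqN :=
  [set x | forall n : nat,
     (lex_le (lshift_seq b) (iter n lshift_seq x) /\ lex_le (iter n lshift_seq x) a) \/
     (lex_le b (iter n lshift_seq x) /\ lex_le (iter n lshift_seq x) (lshift_seq a))].

Definition language (n : nat) (X : set bitseqN) : {set n.-tuple bool} :=
  [set w : n.-tuple bool |
     `[< exists x, exists m, X x /\ forall i : 'I_n, x (m + i)%N = tnth w i >]].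

(* topological entropy of the lshift_seq restricted to X (a subshift):
   lim_n (1/n) log #B_n(X), with the convention log of max(1, .) so that the
   empty set has entropy 0. *)
Definition htop (R : realType) (X : set bitseqN) : R :=
  limn (fun n : nat => (ln ((maxn 1 #|language n X|)%:R : R) / n%:R)%R).

(* Main.v *)
Require Import Defs.
From mathcomp Require Import all_boot all_order all_algebra.
From mathcomp Require Import all_classical all_reals all_analysis.
From mathcomp Require Import ring lra zify.
Local Open Scope classical_set_scope.

Module Helpers.
Set Implicit Arguments.

Definition bcons (c : bool) (z : bitseqN) : bitseqN :=
  fun i => if i is j.+1 then z j else c.

Lemma bconsE x : x = bcons (x 0%N) (lshift_seq x).
Proof. by apply: funext; case. Qed.

Lemma lt_irr x : ~ lex_lt x x.
Proof. by case=> k [_ [->]]. Qed.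

Lemma lt_asym x y : lex_lt x y -> lex_lt y x -> False.
Proof.
case=> k [hk [xk yk]] [l [hl [yl xl]]].
case: (ltngtP k l) => [kl|lk|e].
- by move: (hl _ kl); rewrite xk yk.
- by move: (hk _ lk); rewrite xl yl.
- by subst l; rewrite xk in xl.
Qed.

Lemma llt_trans x y z : lex_lt x y -> lex_lt y z -> lex_lt x z.
Proof.
case=> k [hk [xk yk]] [l [hl [yl zl]]].
case: (ltngtP k l) => [kl|lk|e].
- exists k; split; last by rewrite xk -(hl _ kl) yk.
  by move=> i ik; rewrite hk // hl // (ltn_trans ik kl).
- exists l; split; last by rewrite zl (hk _ lk) yl.
  by move=> i il; rewrite hk ?hl // (ltn_trans il lk).
- by subst l; rewrite yk in yl.
Qed.

Lemma lle_trans x y z : lex_le x y -> lex_le y z -> lex_le x z.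
Proof.
case=> [->|xy] [<-|yz]; rewrite /lex_le; auto.
by right; apply: llt_trans xy yz.
Qed.

Lemma lle_lt_trans x y z : lex_le x y -> lex_lt y z -> lex_lt x z.
Proof. by case=> [->|xy] yz //; apply: llt_trans xy yz. Qed.

Lemma llt_le_trans x y z : lex_lt x y -> lex_le y z -> lex_lt x z.
Proof. by move=> xy [<-|yz] //; apply: llt_trans xy yz. Qed.

Lemma lt_le_false x y : lex_lt x y -> lex_le y x -> False.
Proof. by move=> xy [e|yx]; [subst y; apply: lt_irr xy | apply: lt_asym xy yx]. Qed.

Lemma lex_total x y : lex_le x y \/ lex_lt y x.
Proof.
case: (pselect (x = y)) => [->|nxy]; first by left; left.
have : exists i, x i != y i.
  apply: contra_notP nxy => H; apply: funext => i.
  by apply/eqP; apply: contra_notP H => H; exists i; apply/negP.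
move=> ex; case: (ex_minnP ex) => k xk hmin.
have hk : forall i, (i < k)%N -> x i = y i.
  move=> i ik; apply/eqP; apply: contraTT ik => H; by rewrite -leqNgt hmin.
move: xk; case ex1: (x k); case ey1: (y k) => // _.
- by right; exists k; split => // i ik; rewrite hk.
- by left; right; exists k.
Qed.

Lemma cons_lt c u v : lex_lt (bcons c u) (bcons c v) <-> lex_lt u v.
Proof.
split.
- case=> [[|k]] [hk [uk vk]]; first by move: uk vk => /= ->.
  exists k; split => // i ik; exact: (hk i.+1).
- case=> k [hk [uk vk]]; exists k.+1; split => // -[|i] //= ik; exact: hk.
Qed.

Lemma cons_le c u v : lex_le (bcons c u) (bcons c v) <-> lex_le u v.
Proof.
split.
- case=> [e|h]; last by right; apply: (proj1 (cons_lt c u v)) h.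
  left; apply: funext => i; exact: (congr1 (fun f => f i.+1) e).
- by case=> [->|h]; [left|right; apply/(proj2 (cons_lt c u v))].
Qed.

Lemma cons01 u v : lex_lt (bcons false u) (bcons true v).
Proof. by exists 0%N. Qed.

Lemma cons0_le w : lex_le (bcons false w) w.
Proof.
case: (pselect (exists i, w i = true)) => [ex|nex]; last first.
  left; apply: funext => -[|i] /=.
  - by case e: (w 0%N) => //; case: nex; exists 0%N.
  - by case e: (w i); case e': (w i.+1) => //; case: nex; [exists i| exists i.+1].
case: (ex_minnP ex) => k wk hmin.
have hk : forall i, (i < k)%N -> w i = false.
  move=> i ik; case e: (w i) => //; by move: (hmin _ e); rewrite leqNgt ik.
right; exists k; split; last split => //.
- move=> [|i] ik /=; first by rewrite hk.
  by rewrite !hk // (ltn_trans _ ik).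
- by case: k wk hmin hk => [|k] //= _ _ hk; rewrite hk.
Qed.

Lemma cons1_le w : lex_le w (bcons true w).
Proof.
case: (pselect (exists i, ~~ w i)) => [ex|nex]; last first.
  left; apply: funext => -[|i] /=.
  - by case e: (w 0%N) => //; case: nex; exists 0%N; rewrite e.
  - by case e: (w i); case e': (w i.+1) => //; case: nex; [exists i.+1| exists i]; rewrite ?e ?e'.
case: (ex_minnP ex) => k /negbTE wk hmin.
have hk : forall i, (i < k)%N -> w i = true.
  move=> i ik; case e: (w i) => //; by move: (hmin i); rewrite e leqNgt ik => /(_ isT).
right; exists k; split; last split => //.
- move=> [|i] ik /=; first by rewrite hk.
  by rewrite !hk // (ltn_trans _ ik).
- by case: k wk hmin hk => [|k] //= _ _ hk; rewrite hk.
Qed.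

Unset Strict Implicit.

Notation sh := lshift_seq.

Lemma iter_app n x i : iter n sh x i = x (n + i)%N.
Proof. by elim: n i => [|n IH] i //=; rewrite /lshift_seq IH addnS. Qed.

Lemma iter_add m p x : iter m sh (iter p sh x) = iter (m + p) sh x.
Proof. by rewrite iterD. Qed.

Lemma head0 a z : a 0%N = false -> lex_le z a -> z 0%N = false.
Proof.
move=> ha H; case e: (z 0%N) => //; exfalso; apply: (lt_le_false _ H).
by exists 0%N; rewrite ha e.
Qed.

Lemma head1 b z : b 0%N = true -> lex_le b z -> z 0%N = true.
Proof.
move=> hb H; case e: (z 0%N) => //; exfalso; apply: (lt_le_false _ H).
by exists 0%N; rewrite hb e.
Qed.

Lemma le_a_sa a : a 0%N = false -> lex_le a (sh a).
Proof. by move=> ha; rewrite {1}(bconsE a) ha; apply: cons0_le. Qed.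

Lemma le_sb_b b : b 0%N = true -> lex_le (sh b) b.
Proof. by move=> hb; rewrite {2}(bconsE b) hb; apply: cons1_le. Qed.

Lemma shift_le0 a z : a 0%N = false -> lex_le z a -> lex_le (sh z) (sh a).
Proof.
move=> ha H; have hz := head0 ha H.
by move: H; rewrite (bconsE z) (bconsE a) hz ha => /cons_le.
Qed.

Lemma shift_le1 b z : b 0%N = true -> lex_le b z -> lex_le (sh b) (sh z).
Proof.
move=> hb H; have hz := head1 hb H.
by move: H; rewrite (bconsE z) (bconsE b) hz hb => /cons_le.
Qed.

Lemma unshift0 a z : a 0%N = false -> z 0%N = false -> lex_le (sh z) (sh a) -> lex_le z a.
Proof. by move=> ha hz H; rewrite (bconsE z) (bconsE a) hz ha; apply/cons_le. Qed.

Lemma unshift1 b z : b 0%N = true -> z 0%N = true -> lex_le (sh b) (sh z) -> lex_le b z.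
Proof. by move=> hb hz H; rewrite (bconsE z) (bconsE b) hz hb; apply/cons_le. Qed.

Lemma push0 t z : z 0%N = false -> lex_le t z -> lex_le t (sh z).
Proof.
move=> hz H; case: (lex_total t (sh z)) => // H2; exfalso.
apply: (lt_irr (x := z)); apply: (lle_lt_trans _ (llt_le_trans H2 H)).
by rewrite {1}(bconsE z) hz; apply: cons0_le.
Qed.

Lemma push1 u z : z 0%N = true -> lex_le z u -> lex_le (sh z) u.
Proof.
move=> hz H; case: (lex_total (sh z) u) => // H2; exfalso.
apply: (lt_irr (x := z)); apply: (lle_lt_trans H (llt_le_trans H2 _)).
by rewrite {2}(bconsE z) hz; apply: cons1_le.
Qed.

Definition EC (a b z : bitseqN) := lex_le z a \/ lex_le b z.
Definition IC (t u z : bitseqN) := lex_le t z /\ lex_le z u.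

Lemma stepI a b z : a 0%N = false -> b 0%N = true -> EC a b z ->
  IC (sh b) (sh a) z -> IC (sh b) (sh a) (sh z).
Proof.
move=> ha hb [H|H] [h1 h2].
- have hz := head0 ha H; split; [exact: push0 | exact: shift_le0].
- have hz := head1 hb H; split; [exact: shift_le1 | exact: push1].
Qed.

Lemma part1 a b : a 0%N = false -> b 0%N = true ->
  Fset a b = Kset (sh b) (sh a).
Proof.
move=> ha hb; apply: funext => x; apply: propext; split => H n.
- case: (H n) => -[h1 h2].
  + by split => //; exact: lle_trans h2 (le_a_sa ha).
  + by split => //; exact: lle_trans (le_sb_b hb) h1.
- set z := iter n sh x.
  have [h1 h2] : IC (sh b) (sh a) z by exact: H.
  have [h3 h4] : IC (sh b) (sh a) (sh z) by rewrite /z -iterS; exact: H.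
  case e: (z 0%N).
  + by right; split => //; apply: unshift1.
  + by left; split => //; apply: unshift0.
Qed.

Lemma K_E a b x : a 0%N = false -> b 0%N = true ->
  Kset (sh b) (sh a) x -> Eset a b x.
Proof.
move=> ha hb; rewrite -part1 // => H n.
by case: (H n) => -[h1 h2]; [left|right].
Qed.

Lemma EI_K a b x : a 0%N = false -> b 0%N = true ->
  Eset a b x -> lex_interval (sh b) (sh a) x -> Kset (sh b) (sh a) x.
Proof.
move=> ha hb HE HI n; elim: n => [|n IH] //.
by rewrite iterS; apply: stepI => //; apply: HE.
Qed.

Lemma part2 a b : a 0%N = false -> b 0%N = true ->
  Eset a b `&` lex_interval (sh b) (sh a) = Fset a b.
Proof.
move=> ha hb; rewrite part1 //; apply: funext => x; apply: propext; split.
- by case=> HE HI; apply: EI_K.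
- move=> H; split; first exact: K_E.
  exact: (H 0%N).
Qed.

Lemma E_shift a b x p : Eset a b x -> Eset a b (iter p sh x).
Proof. by move=> H n; rewrite iter_add; apply: H. Qed.

Lemma const_step a b y j : a 0%N = false -> b 0%N = true -> Eset a b y ->
  ~ IC (sh b) (sh a) (iter j.+1 sh y) -> y j.+1 = y j.
Proof.
move=> ha hb HE nI.
have yj : forall k, y k = iter k sh y 0%N by move=> k; rewrite iter_app addn0.
rewrite !yj iterS; set z := iter j sh y.
have Ez : EC a b z by exact: HE.
have Esz : EC a b (sh z) by rewrite /z -iterS; exact: HE.
rewrite iterS -/z in nI.
case: Ez => H.
- have hz := head0 ha H; have h2 := shift_le0 ha H.
  case: Esz => H'.
  + by rewrite (head0 ha H') hz.
  + by case: nI; split => //; apply: lle_trans (le_sb_b hb) H'.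
- have hz := head1 hb H; have h1 := shift_le1 hb H.
  case: Esz => H'.
  + by case: nI; split => //; apply: lle_trans H' (le_a_sa ha).
  + by rewrite (head1 hb H') hz.
Qed.

Lemma structE a b y n : a 0%N = false -> b 0%N = true -> Eset a b y ->
  exists m c, (m <= n)%N /\ (forall j, (j < m)%N -> y j = c) /\
    ((m < n)%N -> Kset (sh b) (sh a) (iter m sh y)).
Proof.
move=> ha hb HE; elim: n => [|n [m [c [mn [hc hK]]]]].
  by exists 0%N, true; split.
case: (ltngtP m n) => [mlt|nm|e].
- exists m, c; split; first exact: ltnW.
  by split => // _; apply: hK.
- by move: nm; rewrite ltnNge mn.
- subst m.
  case: (pselect (IC (sh b) (sh a) (iter n sh y))) => HI.
  + exists n, c; split => //; split => // _.
    by apply: EI_K => //; apply: E_shift.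
  + clear mn; case: n hc hK HI => [|n] hc hK HI.
    * exists 1%N, (y 0%N); split => //; split => // -[|j] //.
    * exists n.+2, c; split => //; split; last by rewrite ltnn.
      move=> j.
      rewrite ltnS leq_eqVlt => /orP [/eqP ->|jlt]; last exact: hc.
      by rewrite (const_step ha hb HE HI) hc.
Qed.

Lemma lang_mono n (X Y : set bitseqN) : X `<=` Y -> language n X \subset language n Y.
Proof.
move=> XY; apply/fintype.subsetP => w; rewrite !inE => -[x [m [Xx H]]].
by exists x, m; split => //; apply: XY.
Qed.

Definition recon n (d : 'I_n.+1 * bool * n.-tuple bool) : n.-tuple bool :=
  [tuple (if (i < d.1.1)%N then d.1.2 else nth false d.2 (i - d.1.1)) | i < n].

Lemma lang_E_sub a b n : a 0%N = false -> b 0%N = true ->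
  language n (Eset a b) \subset
  (@recon n) @: (finset.setX (finset.setX [set: 'I_n.+1] [set: bool])
     ([tuple false | i < n] |: language n (Kset (sh b) (sh a)))).
Proof.
move=> ha hb; apply/fintype.subsetP => w; rewrite [w \in language _ _]inE => /asboolP -[x [p [Ex Hw]]].
set y := iter p sh x.
have Ey : Eset a b y by apply: E_shift.
have yE : forall i, y i = x (p + i)%N by move=> i; rewrite /y iter_app.
have [m [c [mn [hc hK]]]] := structE n ha hb Ey.
have mn1 : (m < n.+1)%N by [].
case: (ltnP m n) => [mlt|nm].
- set v := [tuple (iter m sh y) i | i < n].
  apply/imsetP; exists (Ordinal mn1, c, v).
    rewrite !inE /=; apply/orP; right; apply/asboolP.
    exists (iter m sh y), 0%N; split; first exact: hK.
    by move=> i; rewrite add0n /v tnth_mktuple.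
  apply: eq_from_tnth => i; rewrite tnth_mktuple /=.
  case: ifP => him.
  + by rewrite -Hw -yE hc.
  + have ik : (i - m < n)%N.
      by move: (ltn_ord i); lia.
    rewrite -(tnth_nth false v (Ordinal ik)) /v tnth_mktuple /= iter_app.
    rewrite -Hw -yE; congr y; move: him; lia.
- apply/imsetP; exists (Ordinal mn1, c, [tuple false | i < n]).
    by rewrite !inE /= eqxx.
  apply: eq_from_tnth => i; rewrite tnth_mktuple /=.
  have -> : (i < m)%N by move: (ltn_ord i) nm; lia.
  by rewrite -Hw -yE hc //; move: (ltn_ord i) nm; lia.
Qed.

Lemma card_bound a b n : a 0%N = false -> b 0%N = true ->
  let e := #|language n (Eset a b)| in
  let k := #|language n (Kset (sh b) (sh a))| in
  (maxn 1 k <= maxn 1 e)%N /\ (maxn 1 e <= 4 * n.+1 * maxn 1 k)%N.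
Proof.
move=> ha hb e k.
have ke : (k <= e)%N.
  rewrite /k /e; apply: subset_leq_card; apply: lang_mono => x; exact: K_E.
have ek : (e <= n.+1 * 2 * k.+1)%N.
  rewrite /e; apply: (leq_trans (subset_leq_card (lang_E_sub n ha hb))).
  apply: (leq_trans (leq_imset_card _ _)).
  rewrite !cardsX !cardsT card_ord card_bool cardsU1.
  rewrite leq_mul2l /k; apply/orP; right; by case: (_ \notin _); rewrite ?add1n ?add0n.
clearbody e k; have hk1 : (k.+1 <= 2 * maxn 1 k)%N by lia.
have hM : (1 <= maxn 1 k)%N by lia.
split; first lia.
have h2 : (n.+1 * 2 * k.+1 <= 4 * n.+1 * maxn 1 k)%N.
  rewrite -mulnA [4 * _]mulnC -mulnA leq_mul2l; apply/orP; right; lia.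
have h3 : (1 <= 4 * n.+1 * maxn 1 k)%N by rewrite !muln_gt0.
lia.
Qed.

Import Order.TTheory GRing.Theory Num.Theory.
Import numFieldNormedType.Exports.
Section Ana.
Local Open Scope ring_scope.

Lemma limn_eq_diff (R : realType) (u v : nat -> R) :
  (fun n => v n - u n) @ \oo --> (0:R) -> limn u = limn v.
Proof.
move=> d; rewrite /lim /lim_in; congr get; apply: funext => l; apply: propext.
split => H.
- have -> : v = (fun n => u n + (v n - u n)) by apply: funext => n; rewrite addrC subrK.
  by rewrite -[l]addr0; apply: cvgD.
- have -> : u = (fun n => v n - (v n - u n)) by apply: funext => n; rewrite opprB addrC subrK.
  by rewrite -[l]subr0; apply: cvgB.
Qed.

Lemma ln_bound (R : realType) (n : nat) : (1 <= n)%N ->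
  ln ((4 * n.+1)%:R : R) / n%:R <= 8 * Num.sqrt ((n.+1)%:R^-1).
Proof.
move=> n1.
set t := Num.sqrt (n.+1%:R : R).
have t0 : 0 < t by rewrite sqrtr_gt0 ltr0n.
have tt : t ^+ 2 = n.+1%:R by rewrite sqr_sqrtr // ler0n.
have e4 : (4 * n.+1)%:R = (2 * t) ^+ 2 :> R by rewrite exprMn tt natrM -natrX.
have hL : ln ((4 * n.+1)%:R : R) <= 4 * t.
  rewrite e4 lnXn; last by rewrite mulr_gt0.
  have := ln_sublinear (mulr_gt0 (ltr0n R 2) t0) => h.
  rewrite mulr2n; lra.
rewrite sqrtrV ?ler0n // -/t.
have n0 : 0 < n%:R :> R by rewrite ltr0n.
rewrite ler_pdivrMr //.
apply: (le_trans hL).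
have -> : 4 * t = 4 * (t ^+ 2) * t^-1 by rewrite expr2 mulrA mulfK // gt_eqF.
rewrite tt [in X in _ <= X]mulrAC ler_pM2r ?invr_gt0 //.
rewrite -!natrM ler_nat; lia.
Qed.

Lemma w_cvg (R : realType) :
  (fun n : nat => ln ((4 * n.+1)%:R : R) / n%:R) @ \oo --> (0:R).
Proof.
apply: (@squeeze_cvgr _ _ _ _ (fun _ => 0) (fun n : nat => 8 * Num.sqrt ((n.+1)%:R^-1 : R))).
- exists 1%N => // n /= n1; apply/andP; split; last exact: ln_bound.
  apply: divr_ge0; last exact: ler0n.
  by apply: ln_ge0; rewrite ler1n muln_gt0.
- exact: cvg_cst.
- rewrite -[0 : R](mulr0 8); apply: cvgM; first exact: cvg_cst.
  rewrite -sqrtr0.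
  exact: (cvg_comp _ _ (@cvg_harmonic R) (@sqrt_continuous R 0)).
Qed.

Lemma htop_eq (R : realType) a b : a 0%N = false -> b 0%N = true ->
  htop R (Kset (lshift_seq b) (lshift_seq a)) = htop R (Eset a b).
Proof.
move=> ha hb; rewrite /htop; apply: limn_eq_diff.
apply: (@squeeze_cvgr _ _ _ _ (fun _ => 0) (fun n : nat => ln ((4 * n.+1)%:R : R) / n%:R)); last first.
- exact: w_cvg.
- exact: cvg_cst.
exists 1%N => // n /= n1.
have [h1 h2] := card_bound n ha hb.
set e := #|language n (Eset a b)| in h1 h2 *.
set k := #|language n (Kset (sh b) (sh a))| in h1 h2 *.
have k0 : 0 < (maxn 1 k)%:R :> R by rewrite ltr0n; lia.
have e0 : 0 < (maxn 1 e)%:R :> R by rewrite ltr0n; lia.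
have c0 : 0 < (4 * n.+1)%:R :> R by rewrite ltr0n; lia.
rewrite -mulrBl; apply/andP; split.
- apply: mulr_ge0; last by rewrite invr_ge0 ler0n.
  by rewrite subr_ge0 ler_ln ?posrE // ler_nat.
- apply: ler_wpM2r; first by rewrite invr_ge0 ler0n.
  rewrite lerBlDr -lnM ?posrE //.
  by rewrite ler_ln ?posrE ?mulr_gt0 // -natrM ler_nat.
Qed.

End Ana.
End Helpers.

Theorem mainTheorem6 (R : realType) (a b : bitseqN) :
  a 0%N = false -> b 0%N = true ->
  Fset a b = Kset (lshift_seq b) (lshift_seq a) /\
  (Eset a b `&` lex_interval (lshift_seq b) (lshift_seq a) = Fset a b /\
   Fset a b = Kset (lshift_seq b) (lshift_seq a)) /\
  htop R (Kset (lshift_seq b) (lshift_seq a)) = htop R (Eset a b).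
Proof.
move=> ha hb.
split; first exact: (Helpers.part1 ha hb).
split; first split; [exact: (Helpers.part2 ha hb) | exact: (Helpers.part1 ha hb)|].
exact: (Helpers.htop_eq R ha hb).
Qed.
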